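(* Let $f\in\mathcal H$, $f\neq 0$, and let $d=\operatorname{ord}_0(f)$. Then $f$ is $\mathcal H$-inner if and only if $f=c\,\Pi_{[f]}\big(k_0^{(d)}\big)$ for some nonzero constant $c\in\mathbb C$. Moreover, $\Pi_{[f]}\big(k_0^{(d)}\big)$ is always an $\mathcal H$-inner function.
   Context: Standing assumptions: $\Omega\subset\mathbb C$ is a domain with $0\in\Omega$, and $\mathcal H$ is a Hilbert space of analytic functions on $\Omega$ in which every point evaluation $f\mapsto f(w)$, $w\in\Omega$, is bounded (a reproducing kernel Hilbert space); the shift $S$, $(Sf)(z)=zf(z)$, is a bounded operator on $\mathcal H$; and the analytic polynomials $\mathcal P$ are dense in $\mathcal H$. For $w\in\Omega$ and $m\ge 0$, $k_w^{(m)}$ denotes the unique element of $\mathcal H$ with $\langle f,k_w^{(m)}\rangle=f^{(m)}(w)$ for all $f\in\mathcal H$, and $k_w=k_w^{(0)}$. For $f\in\mathcal H$, $[f]$ denotes the closure in $\mathcal H$ of $\operatorname{span}\{z^kf:k\ge0\}$. For a closed subspace $V$, $\Pi_V$ is the orthogonal projection onto $V$. $\operatorname{ord}_0(f)$ is the order of the zero of $f$ at $0$. A function $f\in\mathcal H\setminus\{0\}$ is called $\mathcal H$-inner if $\langle f,z^kf\rangle=0$ for all integers $k\ge1$ (no normalization required). *)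

(* Defs.v *)
From HB Require Import structures.
From mathcomp Require Import all_boot all_order all_algebra.
From mathcomp Require Import all_classical all_reals all_analysis.
From mathcomp Require Import complex.
Import Order.TTheory GRing.Theory Num.Theory.
Import numFieldNormedType.Exports.
Set Implicit Arguments.
Unset Strict Implicit.
Unset Printing Implicit Defensive.
Local Open Scope ring_scope.
Local Open Scope classical_set_scope.

(* The complex numbers over a real type R, seen as a numClosedFieldType so that
   MathComp-Analysis equips it with its norm topology (|z| = complex modulus),
   so that [derive1n] is the complex derivative. *)
Definition Cx (R : realType) : numClosedFieldType := R[i].

Definition is_inner_product (R : realType) (V : lmodType (Cx R))
    (ip : V -> V -> Cx R) : Prop :=
  (forall (a : Cx R) (f g h : V), ip (a *: f + g) h = a * ip f h + ip g h) /\
  (forall f g : V, ip g f = (ip f g)^*) /\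
  (forall f : V, 0 <= ip f f) /\
  (forall f : V, ip f f = 0 -> f = 0).

Definition hnorm (R : realType) (V : lmodType (Cx R)) (ip : V -> V -> Cx R)
    (f : V) : R :=
  Num.sqrt (complex.Re (ip f f)).

Definition hcomplete (R : realType) (V : lmodType (Cx R))
    (ip : V -> V -> Cx R) : Prop :=
  forall u : nat -> V,
    (forall e : R, 0 < e -> exists N : nat, forall m n : nat,
        (N <= m)%N -> (N <= n)%N -> hnorm ip (u m - u n) < e) ->
    exists l : V, forall e : R, 0 < e -> exists N : nat, forall n : nat,
        (N <= n)%N -> hnorm ip (u n - l) < e.

Definition hclosure (R : realType) (V : lmodType (Cx R))
    (ip : V -> V -> Cx R) (A : set V) : set V :=
  [set x | forall e : R, 0 < e -> exists2 a, A a & hnorm ip (x - a) < e].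

Definition is_proj (R : realType) (V : lmodType (Cx R))
    (ip : V -> V -> Cx R) (A : set V) (x p : V) : Prop :=
  A p /\ (forall v : V, A v -> ip (x - p) v = 0).

Definition hproj (R : realType) (V : lmodType (Cx R))
    (ip : V -> V -> Cx R) (A : set V) (x : V) : V :=
  xget 0 [set p | is_proj ip A x p].

Definition analytic_on (R : realType) (Om : set (Cx R)) (g : Cx R -> Cx R)
    : Prop :=
  forall w : Cx R, Om w -> exists r : Cx R, 0 < r /\
    exists a : nat -> Cx R, forall z : Cx R, `|z - w| < r ->
      (fun n : nat => \sum_(k < n) a k * (z - w) ^+ k) @ \oo --> g z.

Definition is_ord0 (R : realType) (g : Cx R -> Cx R) (d : nat) : Prop :=
  derive1n d g 0 != 0 /\ (forall n : nat, (n < d)%N -> derive1n n g 0 = 0).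

(* ---------- the standing assumptions ----------
   H is modelled as a complex vector space V with inner product ip, together
   with the map ev : V -> (C -> C) sending an element to the analytic function
   it is (only its values on Om matter); S is the shift. *)
Record standing_assumptions (R : realType) (Om : set (Cx R))
    (V : lmodType (Cx R)) (ip : V -> V -> Cx R) (ev : V -> Cx R -> Cx R)
    (S : V -> V) : Prop := {
  sa_open : open Om;
  sa_connected : connected Om;
  sa_zero : Om 0;
  sa_inner : is_inner_product ip;
  sa_complete : hcomplete ip;
  sa_ev_linear : forall (a : Cx R) (f g : V) (z : Cx R), Om z ->
      ev (a *: f + g) z = a * ev f z + ev g z;
  sa_ev_inj : forall f g : V, (forall z, Om z -> ev f z = ev g z) -> f = g;
  sa_analytic : forall f : V, analytic_on Om (ev f);
  sa_eval_bounded : forall w : Cx R, Om w -> exists M : R, forall f : V,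
      Normc.normc (ev f w) <= M * hnorm ip f;
  sa_shift : forall (f : V) (z : Cx R), Om z -> ev (S f) z = z * ev f z;
  sa_shift_linear : forall (a : Cx R) (f g : V), S (a *: f + g) = a *: S f + S g;
  sa_shift_bounded : exists M : R, forall f : V, hnorm ip (S f) <= M * hnorm ip f;
  sa_poly_in : forall p : {poly Cx R}, exists g : V,
      forall z, Om z -> ev g z = p.[z];
  sa_poly_dense : forall f : V, hclosure ip
      [set g | exists p : {poly Cx R}, forall z, Om z -> ev g z = p.[z]] f;
  (* the elements k_w^{(m)} (presupposed by the paper's notation) exist *)
  sa_kernels : forall (w : Cx R), Om w -> forall m : nat, exists k : V,
      forall f : V, ip f k = derive1n m (ev f) w
}.

Definition kernel_deriv (R : realType) (V : lmodType (Cx R))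
    (ip : V -> V -> Cx R) (ev : V -> Cx R -> Cx R) (w : Cx R) (m : nat) : V :=
  xget 0 [set k | forall f : V, ip f k = derive1n m (ev f) w].

Definition cyclic_subspace (R : realType) (V : lmodType (Cx R))
    (ip : V -> V -> Cx R) (S : V -> V) (f : V) : set V :=
  hclosure ip [set g | exists (n : nat) (c : nat -> Cx R),
                        g = \sum_(k < n) c k *: iter k S f].

Definition H_inner (R : realType) (V : lmodType (Cx R))
    (ip : V -> V -> Cx R) (S : V -> V) (f : V) : Prop :=
  f <> 0 /\ (forall k : nat, (1 <= k)%N -> ip f (iter k S f) = 0).

(* Main.v *)
Require Import Defs.
From HB Require Import structures.
From mathcomp Require Import all_boot all_order all_algebra.
From mathcomp Require Import all_classical all_reals all_analysis.
From mathcomp Require Import complex.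
From mathcomp Require Import ring lra.
Import Order.TTheory GRing.Theory Num.Theory.
Import numFieldNormedType.Exports.
Local Open Scope ring_scope.
Local Open Scope classical_set_scope.

Set Implicit Arguments. Unset Strict Implicit.

Section IP.
Variables (R : realType) (V : lmodType (Cx R)) (ip : V -> V -> Cx R).
Hypothesis Hip : is_inner_product ip.

Lemma ipDZl a f g h : ip (a *: f + g) h = a * ip f h + ip g h.
Proof. by case: Hip. Qed.
Lemma ipC f g : ip g f = (ip f g)^*.
Proof. by case: Hip => _ []. Qed.
Lemma ip_ge0 f : 0 <= ip f f.
Proof. by move: Hip => [_ [_ [H _]]]. Qed.
Lemma ip_eq0 f : ip f f = 0 -> f = 0.
Proof. by move: Hip => [_ [_ [_ H]]]; apply: H. Qed.

Lemma ipDl f g h : ip (f + g) h = ip f h + ip g h.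
Proof. by rewrite -[f in LHS]scale1r ipDZl mul1r. Qed.
Lemma ip0l h : ip 0 h = 0.
Proof. by apply/eqP; rewrite -[X in X == _](addrK (ip 0 h)) -ipDl addr0 subrr. Qed.
Lemma ipZl a f h : ip (a *: f) h = a * ip f h.
Proof. by rewrite -[a *: f]addr0 ipDZl ip0l addr0. Qed.
Lemma ipNl f h : ip (- f) h = - ip f h.
Proof. by rewrite -scaleN1r ipZl mulN1r. Qed.
Lemma ipBl f g h : ip (f - g) h = ip f h - ip g h.
Proof. by rewrite ipDl ipNl. Qed.
Lemma ip0r h : ip h 0 = 0.
Proof. by rewrite ipC ip0l conjC0. Qed.
Lemma ipDr f g h : ip h (f + g) = ip h f + ip h g.
Proof. by rewrite ipC ipDl rmorphD (ipC f h) (ipC g h). Qed.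
Lemma ipZr a f h : ip h (a *: f) = a^* * ip h f.
Proof. by rewrite ipC ipZl rmorphM (ipC f h). Qed.
Lemma ipNr f h : ip h (- f) = - ip h f.
Proof. by rewrite ipC ipNl rmorphN (ipC f h). Qed.
Lemma ipBr f g h : ip h (f - g) = ip h f - ip h g.
Proof. by rewrite ipDr ipNr. Qed.
Lemma ip_sumZl n (c : nat -> Cx R) (g : nat -> V) h :
  ip (\sum_(k < n) c k *: g k) h = \sum_(k < n) c k * ip (g k) h.
Proof.
elim: n => [|n IH]; first by rewrite !big_ord0 ip0l.
by rewrite !big_ord_recr /= ipDl IH ipZl.
Qed.
End IP.

Section CS.
Variables (R : realType) (V : lmodType (Cx R)) (ip : V -> V -> Cx R).
Hypothesis Hip : is_inner_product ip.

Lemma ip_real f : (ip f f)^* = ip f f.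
Proof. by apply: conj_Creal; apply: ger0_real; apply: ip_ge0. Qed.

Lemma CS f g : ip f g * (ip f g)^* <= ip f f * ip g g.
Proof.
have [B0|Bn0] := eqVneq (ip g g) 0.
  by rewrite (ip_eq0 Hip B0) !(ip0r Hip) mul0r mulr0.
set a := ip f g; set B := ip g g.
have Bp : 0 < B by rewrite lt_def Bn0 ip_ge0.
have := ip_ge0 Hip (f - (a / B) *: g).
rewrite (ipBl Hip) !(ipBr Hip) !(ipZl Hip) !(ipZr Hip).
have -> : (a / B)^* = a^* / B by rewrite rmorphM fmorphV /= ip_real.
rewrite -/a -/B (ipC Hip f g) -/a.
have -> : ip f f - a^* / B * a - (a / B * a^* - a / B * (a^* / B * B))
  = ip f f - a * a^* / B by field.
by rewrite subr_ge0 ler_pdivrMr.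
Qed.
End CS.

Section NC.
Variable R : realType.
Lemma normC_normc (z : Cx R) : `|z| = (Normc.normc z)%:C%C.
Proof. by case: z => a b; rewrite normc_def. Qed.
Lemma mulCJ (z : Cx R) : z * z^* = ((Normc.normc z) ^+ 2)%:C%C.
Proof. by rewrite -normCK normC_normc -rmorphXn. Qed.
Lemma ge0_RC (z : Cx R) : 0 <= z -> z = (complex.Re z)%:C%C.
Proof. by move=> z0; rewrite [LHS]complexE (ger0_Im z0) mulr0 addr0. Qed.
Lemma ge0_Re (z : Cx R) : 0 <= z -> 0 <= complex.Re z.
Proof. by move=> z0; rewrite -(@ler0c R) -ge0_RC. Qed.
Lemma normc_ge0 (z : Cx R) : 0 <= Normc.normc z.
Proof. by case: z => a b; apply: sqrtr_ge0. Qed.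
End NC.

Section CS2.
Variables (R : realType) (V : lmodType (Cx R)) (ip : V -> V -> Cx R).
Hypothesis Hip : is_inner_product ip.

Lemma ipRe f : ip f f = (complex.Re (ip f f))%:C%C.
Proof. exact/ge0_RC/(ip_ge0 Hip). Qed.
Lemma Reip_ge0 f : 0 <= complex.Re (ip f f).
Proof. exact/ge0_Re/(ip_ge0 Hip). Qed.
Lemma hnorm_ge0 f : 0 <= hnorm ip f.
Proof. exact: sqrtr_ge0. Qed.
Lemma hnorm_sq f : hnorm ip f ^+ 2 = complex.Re (ip f f).
Proof. by rewrite /hnorm sqr_sqrtr // Reip_ge0. Qed.

Lemma CSn f g : Normc.normc (ip f g) <= hnorm ip f * hnorm ip g.
Proof.
have := CS Hip f g; rewrite mulCJ (ipRe f) (ipRe g) -rmorphM lecR /=.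
rewrite -!hnorm_sq -exprMn => h.
rewrite -(ler_pXn2r (_ : (0 < 2)%N)) ?nnegrE //.
  exact: normc_ge0.
by rewrite mulr_ge0 // hnorm_ge0.
Qed.
End CS2.

Section DH.
Variable (R : numFieldType).
Lemma horner0_extN : horner (0 : {poly R}) = 0.
Proof. by apply/funext => y /=; rewrite horner0. Qed.
Lemma hornerD_extN (p : {poly R}) r :
  horner (p * 'X + r%:P) = horner (p * 'X) + horner (r%:P).
Proof. by apply/funext => y /=; rewrite !(hornerE,fctE). Qed.
Lemma horner_scale_extN (p : {poly R}) :
  horner (p * 'X) = (fun x => p.[x] * x)%R.
Proof. by apply/funext => y; rewrite !hornerE. Qed.
Lemma hornerC_extN (r : R) : horner r%:P = cst r.
Proof. by apply/funext => y /=; rewrite !hornerE. Qed.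

Lemma derivable_hornerN (p : {poly R}) x : derivable (horner p) x 1.
Proof.
elim/poly_ind: p => [|p r ih]; first by rewrite horner0_extN.
rewrite hornerD_extN; apply: derivableD.
- rewrite horner_scale_extN/=.
  by apply: derivableM; [exact:ih|exact:derivable_id].
- by rewrite hornerC_extN; exact: derivable_cst.
Qed.

Lemma derivEN (p : {poly R}) : horner (p^`()) = (horner p)^`()%classic.
Proof.
apply/funext => x; elim/poly_ind: p => [|p r ih].
  by rewrite deriv0 hornerC horner0_extN derive1_cst.
rewrite derivD hornerD hornerD_extN.
rewrite derive1E deriveD//; [|exact: derivable_hornerN..].
rewrite -!derive1E hornerC_extN derive1_cst addr0.
rewrite horner_scale_extN derive1E deriveM//; last exact: derivable_hornerN.
rewrite derive_id -derive1E -ih derivC horner0 addr0 derivM hornerD !hornerE.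
by rewrite derivX hornerE mulr1 addrC mulrC scaler1.
Qed.

Lemma derivnEN n (p : {poly R}) : horner (derivn n p) = derive1n n (horner p).
Proof.
elim: n => [|n IH] //.
by rewrite derivnS /= derivEN IH.
Qed.

Lemma derivn_at0 n (p : {poly R}) : derive1n n (horner p) 0 = p`_n *+ n`!.
Proof.
by rewrite -derivnEN horner_coef0 coef_derivn addn0 ffactnn.
Qed.
End DH.

Section Loc.
Variable K : numFieldType.
Lemma derive1n_loc (U : set K) (f g : K -> K) : open U ->
  (forall z, U z -> f z = g z) -> forall n z, U z -> derive1n n f z = derive1n n g z.
Proof.
move=> Uo fg n; elim: n => [|n IH] z Uz; first exact: fg.
rewrite !derive1nS !derive1E; apply: near_eq_derive.
have := open_nbhs_nbhs (conj Uo Uz); apply: filterS => y Uy; exact: IH.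
Qed.
End Loc.

Section Arch.
Variable R : realType.
Lemma small_seq (c e : R) : 0 < e -> exists N : nat, forall n, (N <= n)%N -> c / n.+1%:R < e.
Proof.
move=> e0; exists (Num.truncn (c / e)) => n Nn.
have h1 := truncnS_gt (c / e).
have h2 : (Num.truncn (c / e)).+1%:R <= n.+1%:R :> R by rewrite ler_nat ltnS.
have h3 : c / e < n.+1%:R by apply: lt_le_trans h1 h2.
by rewrite ltr_pdivrMr // mulrC -ltr_pdivrMr.
Qed.
Lemma lt_sq (a e : R) : 0 <= a -> 0 < e -> (a < e) = (a ^+ 2 < e ^+ 2).
Proof. by move=> a0 e0; rewrite ltr_pXn2r // ?nnegrE // ltW. Qed.
End Arch.

Section HN.
Variables (R : realType) (V : lmodType (Cx R)) (ip : V -> V -> Cx R).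
Hypothesis Hip : is_inner_product ip.
Local Notation Nn u := (complex.Re (ip u u)).

Lemma hnorm_lt u e : 0 < e -> (hnorm ip u < e) = (Nn u < e ^+ 2).
Proof. by move=> e0; rewrite lt_sq // ?hnorm_sq // hnorm_ge0. Qed.
Lemma NnN u : Nn (- u) = Nn u.
Proof. by rewrite (ipNl Hip) (ipNr Hip) opprK. Qed.
Lemma hnB u w : hnorm ip (u - w) = hnorm ip (w - u).
Proof. by rewrite /hnorm -NnN opprB. Qed.

Lemma ipBB u v t : ip (u - t *: v) (u - t *: v) =
  ip u u - t^* * ip u v - t * (ip u v)^* + t * t^* * ip v v.
Proof.
rewrite (ipBl Hip) !(ipBr Hip) !(ipZl Hip) !(ipZr Hip) (ipC Hip v u).
by rewrite conjCK; ring.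
Qed.

Lemma paral u w : Nn (u + w) + Nn (u - w) = 2 * Nn u + 2 * Nn w.
Proof.
apply: (@complexI R).
rewrite !rmorphD !rmorphM /= -!(ipRe Hip) (ipBl Hip) !(ipBr Hip) !(ipDl Hip) !(ipDr Hip).
have -> : (2%:C)%C = 2 :> Cx R by rewrite (rmorph_nat (real_complex R) 2).
by ring.
Qed.

Lemma Nn2 u : Nn (2 *: u) = 4 * Nn u.
Proof.
apply: (@complexI R).
rewrite !rmorphM /= -!(ipRe Hip) (ipZl Hip) (ipZr Hip) conjC_nat.
have -> : (4%:C)%C = 4 :> Cx R by rewrite (rmorph_nat (real_complex R) 4).
by ring.
Qed.
End HN.

Section Var.
Variables (R : realType) (V : lmodType (Cx R)) (ip : V -> V -> Cx R).
Hypothesis Hip : is_inner_product ip.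
Local Notation Nn u := (complex.Re (ip u u)).

Lemma conjR (x : R) : ((x%:C)%C : Cx R)^* = (x%:C)%C.
Proof. by apply: conj_Creal; apply/complex_realP; exists x. Qed.

Lemma conjRM (x : R) (b : Cx R) : ((x%:C)%C * b)^* = (x%:C)%C * b^*.
Proof. rewrite [LHS]rmorphM; congr (_ * _); exact: conjR. Qed.

Lemma var_bound (w v : V) (d e : R) :
  (forall t : Cx R, d <= Nn (w - t *: v)) -> Nn w < d + e ->
  Normc.normc (ip w v) ^+ 2 < e * (1 + Nn v).
Proof.
move=> Hd Hw.
set b := ip w v; set be := Normc.normc b ^+ 2; set Nv := Nn v.
have Nv0 : 0 <= Nv by apply: (Reip_ge0 Hip).
have be0 : 0 <= be by rewrite /be sqr_ge0.
set s := (1 + Nv)^-1.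
have s1 : s * (1 + Nv) = 1 by rewrite /s mulVf // gt_eqF // ltr_wpDr.
have s0 : 0 < s by rewrite /s invr_gt0 ltr_wpDr.
have E : Nn (w - ((s%:C)%C * b) *: v) = Nn w - 2 * s * be + s ^+ 2 * be * Nv.
  apply: (@complexI R).
  rewrite -(ipRe Hip) ipBB // conjRM -/b.
  rewrite (ipRe Hip w) (ipRe Hip v) -/Nv.
  have Eb' : b * b^* = (Normc.normc b)%:C%C * (Normc.normc b)%:C%C.
    by rewrite mulCJ -rmorphM expr2.
  rewrite !rmorphD !rmorphN !rmorphM /=.
  have -> : (2%:C)%C = 2 :> Cx R by rewrite (rmorph_nat (real_complex R) 2).
  rewrite -Eb'.
  by ring.
have := Hd ((s%:C)%C * b); rewrite E => H1.
have H2 : 2 * s * be - s ^+ 2 * be * Nv < e by lra.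
have H3 : (2 * s * be - s ^+ 2 * be * Nv) * (1 + Nv) = be + s * be.
  have sNv : s * Nv = 1 - s by rewrite -s1; ring.
  have -> : (2 * s * be - s ^+ 2 * be * Nv) * (1 + Nv) = (s * (1 + Nv)) * (2 * be - (s * Nv) * be) by ring.
  rewrite s1 sNv; ring.
have H4 : (2 * s * be - s ^+ 2 * be * Nv) * (1 + Nv) < e * (1 + Nv).
  by rewrite ltr_pM2r // ltr_wpDr.
have : 0 <= s * be by rewrite mulr_ge0 // ltW.
lra.
Qed.
End Var.

Section Dense.
Variables (R : realType) (V : lmodType (Cx R)) (ip : V -> V -> Cx R).
Hypothesis Hip : is_inner_product ip.

Lemma normc_gt0 (z : Cx R) : z != 0 -> 0 < Normc.normc z.
Proof.
move=> z0; rewrite lt_def normc_ge0 andbT; apply/eqP => /Normc.eq0_normc.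
by move/eqP: z0.
Qed.

Lemma dense0h (Phi : V -> Cx R) (D : set V) (C : R) :
  (forall a u w, Phi (a *: u + w) = a * Phi u + Phi w) ->
  (forall v, Normc.normc (Phi v) <= C * hnorm ip v) ->
  (forall v, D v -> Phi v = 0) -> forall l, hclosure ip D l -> Phi l = 0.
Proof.
move=> Hlin Hb HD l Hl.
have PB : forall u w, Phi (u - w) = Phi u - Phi w.
  by move=> u w; rewrite addrC -scaleN1r Hlin mulN1r addrC.
apply/eqP; apply/negP => /negP Pl.
have z0 := normc_gt0 Pl.
have [C0|C0] := leP C 0.
  have := Hb l; have := hnorm_ge0 ip l => h1 h2.
  have : C * hnorm ip l <= 0 by rewrite mulr_le0_ge0.
  lra.
have e0 : 0 < Normc.normc (Phi l) / C by rewrite divr_gt0.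
have [a Da Ha] := Hl _ e0.
have := Hb (l - a); rewrite PB (HD _ Da) subr0 => h.
have : C * hnorm ip (l - a) < C * (Normc.normc (Phi l) / C) by rewrite ltr_pM2l.
rewrite mulrCA divff ?mulr1 ?gt_eqF //.
lra.
Qed.
End Dense.

Section Proj.
Variables (R : realType) (V : lmodType (Cx R)) (ip : V -> V -> Cx R).
Hypothesis Hip : is_inner_product ip.
Hypothesis Hc : hcomplete ip.
Local Notation Nn u := (complex.Re (ip u u)).

Lemma mid_eq (x u w : V) :
  2 *: (x - ((2 : Cx R)^-1 *: u + ((2 : Cx R)^-1 *: w + 0))) = (x - u) + (x - w).
Proof.
rewrite addr0 scalerBr scalerDr !scalerA mulfV ?pnatr_eq0 // !scale1r.
rewrite scaler_nat mulr2n opprD !addrA; congr (_ - _).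
by rewrite addrAC.
Qed.

Lemma inv_le (m N : nat) : (N <= m)%N -> (m.+1%:R : R)^-1 <= (N.+1%:R)^-1.
Proof. by move=> h; rewrite lef_pV2 ?posrE // ler_nat ltnS. Qed.

Lemma arith1 (B im inn iN E : R) : B <= 2 * im + 2 * inn -> im <= iN -> inn <= iN ->
  4 * iN < E -> B < E.
Proof. lra. Qed.

Lemma proj_exists (D : set V) (x : V) :
  D 0 -> (forall (c : Cx R) u w, D u -> D w -> D (c *: u + w)) ->
  exists p, is_proj ip (hclosure ip D) x p.
Proof.
move=> D0 Dl.
pose E := [set r : R | exists2 a, D a & r = Nn (x - a)].
have lbE : lbound E 0 by move=> r [a _ ->]; apply: (Reip_ge0 Hip).
have hiE : has_inf E by split; [exists (Nn (x - 0)); exists 0|exists 0].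
pose d := inf E.
have dle : forall a, D a -> d <= Nn (x - a).
  by move=> a Da; apply: (ge_inf (proj2 hiE)); exists a.
have ex : forall n : nat, exists a, D a /\ Nn (x - a) < d + (n.+1%:R)^-1.
  move=> n; have np : 0 < (n.+1%:R : R)^-1 by rewrite invr_gt0.
  have [r [a Da ->] lt] := inf_adherent np hiE.
  by exists a.
have [a Ha] := choice ex.
have cau : forall m n, Nn (a m - a n) <= 2 * (m.+1%:R)^-1 + 2 * (n.+1%:R)^-1.
  move=> m n.
  have := paral Hip (x - a n) (x - a m).
  have -> : x - a n - (x - a m) = a m - a n.
    by rewrite opprB addrC addrA subrK.
  rewrite -mid_eq Nn2 //.
  have := dle _ (Dl (2 : Cx R)^-1 _ _ (proj1 (Ha n)) (Dl (2 : Cx R)^-1 _ _ (proj1 (Ha m)) D0)).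
  have := proj2 (Ha n); have := proj2 (Ha m).
  move=> h1 h2 h3 h4.
  set A := Nn (x - _ ) in h3 h4. set B := Nn (a m - a n) in h4 *. set C1 := Nn (x - a m) in h1 h4. set C2 := Nn (x - a n) in h2 h4. set im := m.+1%:R^-1 in h1 *. set iN := n.+1%:R^-1 in h2 *. clearbody d A B C1 C2 im iN. lra.
have cauchy : forall e : R, 0 < e -> exists N : nat, forall m n : nat,
    (N <= m)%N -> (N <= n)%N -> hnorm ip (a m - a n) < e.
  move=> e e0; have e2 : 0 < e ^+ 2 by rewrite exprn_gt0.
  have [N HN] := small_seq 4 e2.
  exists N => m n Nm Nn'; rewrite hnorm_lt //.
  exact: arith1 (cau m n) (inv_le Nm) (inv_le Nn') (HN N (leqnn N)).
have [p Hp] := Hc cauchy.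
exists p; split.
  move=> e e0; have [N HN] := Hp e e0; exists (a N); first exact: (proj1 (Ha N)).
  by rewrite (hnB Hip); apply: HN.
have orthD : forall v, D v -> ip (x - p) v = 0.
  move=> v Dv.
  have bn : forall n, Normc.normc (ip (x - a n) v) ^+ 2 < (n.+1%:R)^-1 * (1 + Nn v).
    move=> n; apply: (@var_bound R V ip Hip (x - a n) v d _ _ (proj2 (Ha n))) => t.
    have := dle _ (Dl t v (a n) Dv (proj1 (Ha n))).
    by rewrite opprD addrA addrAC.
  have dn : forall n, Normc.normc (ip (x - p) v - ip (x - a n) v)
      <= hnorm ip (a n - p) * hnorm ip v.
    move=> n; rewrite -(ipBl Hip).
    have -> : x - p - (x - a n) = a n - p by rewrite opprB addrC addrA subrK.
    exact: (CSn Hip).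
  set z := ip (x - p) v.
  apply/eqP; apply/negP => /negP zn0.
  have z0 := normc_gt0 zn0.
  set ze := Normc.normc z in z0.
  set hv := hnorm ip v.
  have hv0 : 0 <= hv by apply: hnorm_ge0.
  have e1 : 0 < (ze / 2) ^+ 2 by rewrite exprn_gt0 // divr_gt0.
  have e2 : 0 < ze / 2 / (hv + 1) by rewrite !divr_gt0 // ltr_wpDl.
  have [N1 HN1] := small_seq (1 + Nn v) e1.
  have [N2 HN2] := Hp _ e2.
  set n := maxn N1 N2.
  have h1 : Normc.normc (ip (x - a n) v) < ze / 2.
    rewrite lt_sq ?normc_ge0 ?divr_gt0 //.
    apply: lt_trans (bn n) _; rewrite mulrC; apply: HN1.
    by rewrite leq_maxl.
  have h2 : hnorm ip (a n - p) < ze / 2 / (hv + 1) by apply: HN2; rewrite leq_maxr.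
  have h3 : hnorm ip (a n - p) * hv <= ze / 2 / (hv + 1) * hv.
    by rewrite ler_wpM2r // ltW.
  have h4 : ze / 2 / (hv + 1) * (hv + 1) = ze / 2.
    by rewrite divfK // gt_eqF // ltr_wpDl.
  have h5 := dn n.
  have h6 : ze <= Normc.normc (z - ip (x - a n) v) + Normc.normc (ip (x - a n) v).
    by rewrite /ze -{1}(subrK (ip (x - a n) v) z); apply: le_normcD.
  move: h1 h3 h4 h5 h6 e2.
  set q := ze / 2 / (hv + 1).
  set B1 := Normc.normc (ip (x - a n) v).
  set B2 := Normc.normc (z - _).
  set H := hnorm ip (a n - p) * hv.
  clearbody q B1 B2 H.
  move=> h1 h3 h4 h5 h6 e2.
  have : q * hv = ze / 2 - q by rewrite -h4; ring.
  lra.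
move=> v Hv.
have lin : forall c u w, ip (c *: u + w) (x - p) = c * ip u (x - p) + ip w (x - p).
  by move=> c u w; apply: (ipDZl Hip).
have bnd : forall u, Normc.normc (ip u (x - p)) <= hnorm ip (x - p) * hnorm ip u.
  by move=> u; rewrite mulrC; apply: (CSn Hip).
have zer : forall u, D u -> ip u (x - p) = 0.
  by move=> u Du; rewrite (ipC Hip) orthD ?conjC0.
have H := @dense0h R V ip (fun u => ip u (x - p)) D (hnorm ip (x - p)) lin bnd zer v Hv.
by rewrite (ipC Hip) /= H conjC0.
Qed.
End Proj.

Section Main.
Variables (R : realType) (Om : set (Cx R)) (V : lmodType (Cx R))
    (ip : V -> V -> Cx R) (ev : V -> Cx R -> Cx R) (S : V -> V).
Hypothesis SA : standing_assumptions Om ip ev S.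

Let Hip := sa_inner SA.
Local Notation K m := (kernel_deriv ip ev 0 m).

Lemma Kprop m g : ip g (K m) = derive1n m (ev g) 0.
Proof.
have := @xgetPex _ 0 [set k | forall f : V, ip f k = derive1n m (ev f) 0].
by move=> /(_ (sa_kernels SA (sa_zero SA) m)); apply.
Qed.

Lemma S0 : S 0 = 0.
Proof.
have := sa_shift_linear SA 1 0 0; rewrite !scale1r !addr0.
by move/(congr1 (fun t => t - S 0)); rewrite addrK subrr.
Qed.
Lemma SZ c g : S (c *: g) = c *: S g.
Proof. by rewrite -[c *: g]addr0 (sa_shift_linear SA) S0 addr0. Qed.
Lemma SD f g : S (f + g) = S f + S g.
Proof. by rewrite -[f]scale1r (sa_shift_linear SA) !scale1r. Qed.
Lemma SB f g : S (f - g) = S f - S g.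
Proof. by rewrite addrC -scaleN1r (sa_shift_linear SA) scaleN1r addrC. Qed.
Lemma iterSZ k c g : iter k S (c *: g) = c *: iter k S g.
Proof. by elim: k => //= k ->; rewrite SZ. Qed.

Lemma Leib0 g : ip (S g) (K 0) = 0.
Proof. by rewrite Kprop /= (sa_shift SA g (sa_zero SA)) mul0r. Qed.

Lemma Leib_poly n g (p : {poly Cx R}) : (forall z, Om z -> ev g z = p.[z]) ->
  ip (S g) (K n.+1) = n.+1%:R * ip g (K n).
Proof.
move=> gp; rewrite !Kprop.
have e1 : forall z, Om z -> ev (S g) z = ('X * p).[z].
  by move=> z Oz; rewrite (sa_shift SA) // gp // hornerM hornerX.
rewrite (derive1n_loc (sa_open SA) e1 _ (sa_zero SA)).
rewrite (derive1n_loc (sa_open SA) gp _ (sa_zero SA)).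
rewrite !derivn_at0 coefXM /= factS mulrnA -mulr_natl.
by rewrite mulr1 mulr_natl -!mulrnA mulnC.
Qed.

Lemma normc_sub (a b : Cx R) : Normc.normc (a - b) <= Normc.normc a + Normc.normc b.
Proof. by rewrite -(complex.normcN b); apply: le_normcD. Qed.

Lemma Leib n g : ip (S g) (K n.+1) = n.+1%:R * ip g (K n).
Proof.
apply/eqP; rewrite -subr_eq0; apply/eqP.
pose Phi := fun g => ip (S g) (K n.+1) - n.+1%:R * ip g (K n).
have [M HM] := sa_shift_bounded SA.
pose C := M * hnorm ip (K n.+1) + Normc.normc (n.+1%:R : Cx R) * hnorm ip (K n).
have lin : forall a u w, Phi (a *: u + w) = a * Phi u + Phi w.
  by move=> a u w; rewrite /Phi (sa_shift_linear SA) !(ipDZl Hip); ring.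
have bnd : forall u, Normc.normc (Phi u) <= C * hnorm ip u.
  move=> u; apply: le_trans (normc_sub _ _) _.
  rewrite Normc.normcM.
  have h1 := CSn Hip (S u) (K n.+1).
  have h2 := CSn Hip u (K n).
  have h3 := HM u.
  have h4 : hnorm ip (S u) * hnorm ip (K n.+1) <= M * hnorm ip u * hnorm ip (K n.+1).
    by rewrite ler_wpM2r // hnorm_ge0.
  have h5 : Normc.normc (n.+1%:R : Cx R) * Normc.normc (ip u (K n))
      <= Normc.normc (n.+1%:R : Cx R) * (hnorm ip u * hnorm ip (K n)).
    by rewrite ler_wpM2l // normc_ge0.
  have -> : C * hnorm ip u = M * hnorm ip u * hnorm ip (K n.+1) +
      Normc.normc (n.+1%:R : Cx R) * (hnorm ip u * hnorm ip (K n)) by rewrite /C; ring.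
  exact: lerD (le_trans h1 h4) h5.
have zer : forall u, [set g | exists p : {poly Cx R}, forall z, Om z -> ev g z = p.[z]] u ->
    Phi u = 0.
  by move=> u [p Hp]; rewrite /Phi (Leib_poly n Hp) subrr.
exact: (dense0h lin bnd zer (sa_poly_dense SA g)).
Qed.

Definition Zp m g := forall j, (j < m)%N -> ip g (K j) = 0.

Lemma Zp_S m g : Zp m g -> Zp m.+1 (S g).
Proof.
move=> Hg [|j] lt; first exact: Leib0.
by rewrite Leib Hg ?mulr0.
Qed.
Lemma Zp_mono m g : Zp m.+1 g -> Zp m g.
Proof. by move=> H j lt; apply: H; apply: ltnW. Qed.
Lemma Zp_iter m k g : Zp m g -> Zp (m + k) (iter k S g).
Proof.
elim: k => [|k IH]; first by rewrite addn0.
by move=> /IH h; rewrite addnS; apply: Zp_S.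
Qed.
Lemma Zp_iterS m k g : Zp m g -> (0 < k)%N -> ip (iter k S g) (K m) = 0.
Proof.
move=> H k0; apply: (@Zp_iter m k g H m); by rewrite -{1}(addn0 m) ltn_add2l.
Qed.

Definition Df f := [set g | exists (n : nat) (c : nat -> Cx R),
                        g = \sum_(k < n) c k *: iter k S f].

Lemma cyc_eq f : cyclic_subspace ip S f = hclosure ip (Df f).
Proof. by []. Qed.

Lemma Df0 f : Df f 0.
Proof. by exists 0%N, (fun _ => 0); rewrite big_ord0. Qed.
Lemma Df_f f : Df f f.
Proof. by exists 1%N, (fun _ => 1); rewrite big_ord1 scale1r. Qed.

Lemma sum_widen n N (c : nat -> Cx R) (G : nat -> V) : (n <= N)%N ->
  \sum_(k < n) c k *: G k = \sum_(k < N) (if (k < n)%N then c k else 0) *: G k.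
Proof.
move=> le; rewrite (big_ord_widen N (fun k => c k *: G k) le) big_mkcond.
by apply: eq_bigr => i _; case: ifP => //; rewrite scale0r.
Qed.

Lemma Df_lin f a u w : Df f u -> Df f w -> Df f (a *: u + w).
Proof.
move=> [n1 [c1 ->]] [n2 [c2 ->]].
exists (maxn n1 n2), (fun k => a * (if (k < n1)%N then c1 k else 0) +
   (if (k < n2)%N then c2 k else 0)).
rewrite (sum_widen c1 _ (leq_maxl n1 n2)) (sum_widen c2 _ (leq_maxr n1 n2)).
rewrite scaler_sumr -big_split; apply: eq_bigr => i _.
by rewrite scalerA scalerDl.
Qed.

Lemma S_sum n (F : nat -> V) : S (\sum_(k < n) F k) = \sum_(k < n) S (F k).
Proof.
elim: n => [|n IH]; first by rewrite !big_ord0 S0.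
by rewrite !big_ord_recr /= SD IH.
Qed.

Lemma Df_S f u : Df f u -> Df f (S u).
Proof.
move=> [n [c ->]]; exists n.+1, (fun k => if k is k'.+1 then c k' else 0).
rewrite (S_sum n (fun k => c k *: iter k S f)) big_ord_recl /= scale0r add0r.
by apply: eq_bigr => i _; rewrite SZ.
Qed.

Lemma cl_S f v : hclosure ip (Df f) v -> hclosure ip (Df f) (S v).
Proof.
move=> Hv e e0.
have [M HM] := sa_shift_bounded SA.
set M1 := Num.max M 1.
have M10 : 0 < M1 by rewrite lt_max ltr01 orbT.
have [a Da Ha] := Hv (e / M1) (divr_gt0 e0 M10).
exists (S a); first exact: Df_S.
rewrite -SB.
have h1 := HM (v - a).
have h2 : M * hnorm ip (v - a) <= M1 * hnorm ip (v - a).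
  by rewrite ler_wpM2r ?hnorm_ge0 // le_max lexx.
have h3 : M1 * hnorm ip (v - a) < M1 * (e / M1) by rewrite ltr_pM2l.
rewrite mulrCA divff ?mulr1 ?gt_eqF // in h3.
exact: le_lt_trans (le_trans h1 h2) h3.
Qed.

Lemma cl_iterS f k v : hclosure ip (Df f) v -> hclosure ip (Df f) (iter k S v).
Proof. by move=> H; elim: k => //= k IH; apply: cl_S. Qed.

Lemma Zp_Df m f g : Zp m f -> Df f g -> Zp m g.
Proof.
move=> Hf [n [c ->]] j lt; rewrite (ip_sumZl Hip); apply: big1 => i _.
rewrite (@Zp_iter m i f Hf j) ?mulr0 //.
by apply: leq_trans lt _; apply: leq_addr.
Qed.

Lemma Zp_cl m f g : Zp m f -> hclosure ip (Df f) g -> Zp m g.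
Proof.
move=> Hf Hg j lt.
have lin : forall a u w, ip (a *: u + w) (K j) = a * ip u (K j) + ip w (K j).
  by move=> a u w; apply: (ipDZl Hip).
have bnd : forall u, Normc.normc (ip u (K j)) <= hnorm ip (K j) * hnorm ip u.
  by move=> u; rewrite mulrC; apply: (CSn Hip).
have zer : forall u, Df f u -> ip u (K j) = 0.
  by move=> u Du; apply: (Zp_Df Hf Du).
exact: (dense0h lin bnd zer Hg).
Qed.

Lemma lead f X n (c : nat -> Cx R) : (forall k, (0 < k)%N -> ip (iter k S f) X = 0) ->
  ip (\sum_(k < n) c k *: iter k S f) X = (\sum_(k < n) c k * ((k : nat) == 0%N)%:R) * ip f X.
Proof.
move=> H; rewrite (ip_sumZl Hip) mulr_suml; apply: eq_bigr => [[[|k] lt]] _.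
  by rewrite /= mulr1.
by rewrite (H k.+1) ?mulr0 /= ?mulr0 ?mul0r.
Qed.

Lemma cl_sub (D : set V) v : D v -> hclosure ip D v.
Proof.
move=> Dv e e0; exists v => //.
by rewrite subrr /hnorm (ip0l Hip) /= sqrtr0.
Qed.

Lemma main_sec f d : f <> 0 -> is_ord0 (ev f) d ->
    (H_inner ip S f <-> exists c : Cx R, c != 0 /\
       f = c *: hproj ip (cyclic_subspace ip S f) (K d)) /\
    H_inner ip S (hproj ip (cyclic_subspace ip S f) (K d)).
Proof.
move=> fn0 [Ln0 Lz].
have Zf : Zp d f by move=> j lt; rewrite Kprop Lz.
set A := cyclic_subspace ip S f.
set P := hproj ip A (K d).
have HP : is_proj ip A (K d) P.
  rewrite /P /hproj; apply: xgetPex; rewrite /A cyc_eq.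
  have Dl : forall (c : Cx R) u w, Df f u -> Df f w -> Df f (c *: u + w).
    by move=> c u w; apply: Df_lin.
  have [p Hp] := proj_exists Hip (sa_complete SA) (K d) (Df0 f) Dl.
  by exists p.
have [AP PK] := HP.
have vP : forall v, A v -> ip v P = ip v (K d).
  move=> v Av; have := PK v Av; rewrite (ipBl Hip) => /eqP; rewrite subr_eq0 => /eqP e.
  by rewrite (ipC Hip P v) -e (ipC Hip (K d) v).
have Af : A f by apply: cl_sub; apply: Df_f.
set L := derive1n d (ev f) 0.
have fPL : ip f P = L by rewrite vP // Kprop.
have Pn0 : P <> 0.
  by move=> P0; move: Ln0; rewrite -/L -fPL P0 (ip0r Hip) eqxx.
have ZP : Zp d P := Zp_cl Zf AP.
have Pinner : H_inner ip S P.
  split=> // k k1.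
  have Ak : A (iter k S P) := cl_iterS k AP.
  by rewrite (ipC Hip) vP // (Zp_iterS ZP k1) conjC0.
split; last exact: Pinner.
split.
- move=> [_ fin].
  have ff0 : ip f f != 0 by apply/eqP => h; apply: fn0; apply: (ip_eq0 Hip).
  have Lne : L != 0 by [].
  set beta := (ip f f / L)^*.
  set w := f - beta *: P.
  have zD : forall v, Df f v -> ip v w = 0.
    move=> v Dv; have Av : A v by apply: cl_sub.
    move: Dv => [n [c ve]].
    rewrite (ipBr Hip) (ipZr Hip) conjCK (vP _ Av) ve.
    rewrite (@lead f f n c); last by move=> k k0; rewrite (ipC Hip) fin ?conjC0.
    rewrite (@lead f (K d) n c); last by move=> k k0; apply: Zp_iterS.
    rewrite Kprop -/L; field.
    exact: Lne.
  have lin : forall a u w', ip (a *: u + w') w = a * ip u w + ip w' w.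
    by move=> a u w'; apply: (ipDZl Hip).
  have bnd : forall u, Normc.normc (ip u w) <= hnorm ip w * hnorm ip u.
    by move=> u; rewrite mulrC; apply: (CSn Hip).
  have zA : forall v, A v -> ip v w = 0.
    by move=> v Av; apply: (dense0h lin bnd zD Av).
  have ww : ip w w = 0.
    by rewrite {1}/w (ipBl Hip) (ipZl Hip) (zA f Af) (zA P AP) mulr0 subrr.
  have w0 := ip_eq0 Hip ww.
  exists beta; split.
    by rewrite /beta conjC_eq0 mulf_neq0 // invr_neq0.
  by move/eqP: w0; rewrite subr_eq0 => /eqP.
- move=> [c [cn0 fe]]; split=> // k k1.
  by rewrite fe iterSZ (ipZl Hip) (ipZr Hip) (proj2 Pinner k k1) !mulr0.
Qed.
End Main.


Unset Implicit Arguments.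

Theorem mainTheorem1 (R : realType) (Om : set (Cx R)) (V : lmodType (Cx R))
    (ip : V -> V -> Cx R) (ev : V -> Cx R -> Cx R) (S : V -> V) :
  standing_assumptions Om ip ev S ->
  forall (f : V) (d : nat), f <> 0 -> is_ord0 (ev f) d ->
    (H_inner ip S f <->
       exists c : Cx R, c != 0 /\
         f = c *: hproj ip (cyclic_subspace ip S f) (kernel_deriv ip ev 0 d)) /\
    H_inner ip S (hproj ip (cyclic_subspace ip S f) (kernel_deriv ip ev 0 d)).
Proof. move=> SA f d fn0 Hd; exact: (@main_sec R Om V ip ev S SA f d fn0 Hd). Qed.
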